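(* For every integer $t\ge1$ and every $a\in\{1,\dots,m\}$, $$q^{(a)}_t(\mathbf{z};q,\mathbf{Q})=\sum_{\mathbf{i}\in\{1,\dots,k+\ell\}^t}\mathrm{wt}(\mathbf{i})\,Q_{c(\mathbf{i})}^{a}\,\mathbf{z}_{\mathbf{i}} .$$
   Context: Fix integers $m\ge1$ and $k_1,\dots,k_m,\ell_1,\dots,\ell_m\ge0$; put $k=\sum k_a$, $\ell=\sum\ell_a$, $d_0=0$, $d_a=d_{a-1}+k_a+\ell_a$. For $i\in\{1,\dots,k+\ell\}$: parity $\bar i=\bar0$ if $d_{a-1}<i\le d_{a-1}+k_a$ for some $a$, $\bar i=\bar1$ if $d_a-\ell_a<i\le d_a$ for some $a$; color $c(i)=a$ if $d_{a-1}<i\le d_a$. Let $q,Q_1,\dots,Q_m$ be indeterminates and $z_1,\dots,z_{k+\ell}$ commuting variables (the $z_i$ of parity $\bar0$ are the ''$x$-variables'', those of parity $\bar1$ the ''$y$-variables''); work in $\mathbb{Q}(q,Q_1,\dots,Q_m)[z_1,\dots,z_{k+\ell}]$. For a sequence $\mathbf{i}=(i_1,\dots,i_t)$: $c(\mathbf{i})$ is the color of $\max\{i_1,\dots,i_t\}$; $\mathbf{z}_{\mathbf{i}}=(-1)^{\ell_1(\mathbf{i})}z_{i_1}\cdots z_{i_t}$; $\ell_s(\mathbf{i})$ is the number of entries of parity $\bar s$; $\delta_s(\mathbf{i})$ is the number of distinct values of parity $\bar s$ among the entries, $\delta(\mathbf{i})=\delta_0(\mathbf{i})+\delta_1(\mathbf{i})$.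 Define $$q^{(a)}_t(\mathbf{z};q,\mathbf{Q})=\sum_{1\le i_1\le\cdots\le i_t\le k+\ell}Q_{c(\mathbf{i})}^a(-q^{-1})^{\ell_1(\mathbf{i})-\delta_1(\mathbf{i})}q^{\ell_0(\mathbf{i})-\delta_0(\mathbf{i})}(q-q^{-1})^{\delta(\mathbf{i})-1}\mathbf{z}_{\mathbf{i}}.$$ A sequence $\mathbf{j}=(j_1,\dots,j_t)$ is up-down if there is $p\in\{1,\dots,t\}$ with $j_1<\cdots<j_p$ and $j_p\ge j_{p+1}\ge\cdots\ge j_t$ ($p$ is the position of the first occurrence of the maximum). Its weight is $\mathrm{wt}(\mathbf{j})=0$ if $\mathbf{j}$ is not up-down, and otherwise $\mathrm{wt}(\mathbf{j})=\prod_{r=1}^{p-1}w^{<}(j_r)\prod_{r=p+1}^{t}w^{\ge}(j_r)$, where $w^{<}(j)=-q^{-1}$ if $\bar j=\bar0$, $w^{<}(j)=q$ if $\bar j=\bar1$, $w^{\ge}(j)=q$ if $\bar j=\bar0$, $w^{\ge}(j)=-q^{-1}$ if $\bar j=\bar1$. *)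

(* Defs.v *)
From HB Require Import structures.
From mathcomp Require Import all_boot all_order all_algebra.
Set Implicit Arguments. Unset Strict Implicit. Unset Printing Implicit Defensive.
Import Order.TTheory GRing.Theory Num.Theory.

(* Colors a range over 1..m; k a, l a are k_a, l_a (values outside 1..m unused).
   Indices i range over 1..N with N = k + l. Index sequences are seq nat (1-based). *)

Definition dd (k l : nat -> nat) (a : nat) : nat := \sum_(1 <= b < a.+1) (k b + l b).
Definition NN (m : nat) (k l : nat -> nat) : nat := dd k l m.

Definition par0 (m : nat) (k l : nat -> nat) (i : nat) : bool :=
  has (fun a => (dd k l a.-1 < i) && (i <= dd k l a.-1 + k a)) (iota 1 m).
Definition par1 (m : nat) (k l : nat -> nat) (i : nat) : bool :=
  has (fun a => (dd k l a - l a < i) && (i <= dd k l a)) (iota 1 m).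
Definition color (m : nat) (k l : nat -> nat) (i : nat) : nat :=
  (find (fun a => (dd k l a.-1 < i) && (i <= dd k l a)) (iota 1 m)).+1.

Definition maxs (s : seq nat) : nat := \max_(x <- s) x.
Definition colseq m k l (s : seq nat) : nat := color m k l (maxs s).
Definition ell0 m k l (s : seq nat) : nat := count (par0 m k l) s.
Definition ell1 m k l (s : seq nat) : nat := count (par1 m k l) s.
Definition delta0 m k l (s : seq nat) : nat := size (undup (filter (par0 m k l) s)).
Definition delta1 m k l (s : seq nat) : nat := size (undup (filter (par1 m k l) s)).

Local Open Scope ring_scope.

Definition zseq (R : comUnitRingType) m k l (z : nat -> R) (s : seq nat) : R :=
  (-1) ^+ ell1 m k l s * \prod_(x <- s) z x.

(* 0-based tuple entries of 'I_N are turned into 1-based indices *)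
Definition idx (N t : nat) (s : t.-tuple 'I_N) : seq nat := [seq (val x).+1 | x <- s].

Definition qat (R : comUnitRingType) (m : nat) (k l : nat -> nat) (q : R) (Q : nat -> R)
    (z : nat -> R) (a t : nat) : R :=
  \sum_(s : t.-tuple 'I_(NN m k l) | sorted leq (idx s))
    Q (colseq m k l (idx s)) ^+ a
    * (- q^-1) ^+ (ell1 m k l (idx s) - delta1 m k l (idx s))%N
    * q ^+ (ell0 m k l (idx s) - delta0 m k l (idx s))%N
    * (q - q^-1) ^+ (delta0 m k l (idx s) + delta1 m k l (idx s)).-1
    * zseq m k l z (idx s).

Definition updown (s : seq nat) : bool :=
  has (fun p => sorted ltn (take p s) && sorted (fun x y => y <= x)%N (drop p.-1 s))
      (iota 1 (size s)).

Definition peak (s : seq nat) : nat := (index (maxs s) s).+1.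

Definition wlt (R : comUnitRingType) m k l (q : R) (j : nat) : R :=
  if par0 m k l j then - q^-1 else if par1 m k l j then q else 0.
Definition wge (R : comUnitRingType) m k l (q : R) (j : nat) : R :=
  if par0 m k l j then q else if par1 m k l j then - q^-1 else 0.

Definition wt (R : comUnitRingType) m k l (q : R) (s : seq nat) : R :=
  if updown s then
    (\prod_(j <- take (peak s).-1 s) wlt m k l q j) * \prod_(j <- drop (peak s) s) wge m k l q j
  else 0.

(* Main.v *)
Require Import Defs.
From HB Require Import structures.
From mathcomp Require Import all_boot all_order all_algebra.
From mathcomp Require Import ring zify.
Import GRing.Theory.
Set Implicit Arguments. Unset Strict Implicit.
Local Open Scope ring_scope.

Section Comb.
Variables (R : comUnitRingType) (m : nat) (k l : nat -> nat) (q : R).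
Local Notation wl := (wlt m k l q).
Local Notation wg := (wge m k l q).
Local Notation WT := (wt m k l q).
Local Notation geqr := (fun x y : nat => (y <= x)%N).

Lemma maxs_cons a s : maxs (a :: s) = maxn a (maxs s).
Proof. by rewrite /maxs big_cons. Qed.

Lemma ltn_rcons_all a M : sorted ltn (rcons a M) -> all (fun y => (y < M)%N) a.
Proof.
move=> H.
have H2 : sorted (fun x y => (y < x)%N) (rev (rcons a M)).
  by rewrite rev_sorted.
rewrite rev_rcons /= in H2.
have := order_path_min (fun y x z (h1 : (y < x)%N) (h2 : (z < y)%N) => ltn_trans h2 h1) H2.
by rewrite all_rev.
Qed.

Lemma geq_trans : transitive geqr.
Proof. by move=> x y z /= h1 h2; apply: leq_trans h2 h1. Qed.

Lemma form_max a M b : sorted ltn (rcons a M) -> sorted geqr (M :: b) ->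
  all (fun x => (x <= M)%N) (a ++ M :: b).
Proof.
move=> Ha Hb; rewrite all_cat /= leqnn /=.
apply/andP; split.
  by apply/allP=> x /(allP (ltn_rcons_all Ha)) /ltnW.
exact: (order_path_min geq_trans Hb).
Qed.

Lemma maxs_form a M b : sorted ltn (rcons a M) -> sorted geqr (M :: b) ->
  maxs (a ++ M :: b) = M.
Proof.
move=> Ha Hb; apply/eqP; rewrite eqn_leq; apply/andP; split.
  apply/bigmax_leqP_seq=> i Hi _; exact: (allP (form_max Ha Hb)).
apply: (@leq_bigmax_seq _ _ xpredT (fun x => x)) => //; by rewrite mem_cat mem_head orbT.
Qed.

Lemma form_updown a M b : sorted ltn (rcons a M) -> sorted geqr (M :: b) ->
  updown (a ++ M :: b) /\ peak (a ++ M :: b) = (size a).+1.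
Proof.
move=> Ha Hb; split.
  apply/hasP; exists (size a).+1.
    by rewrite mem_iota size_cat /= addnS ltnS leq_addr.
  rewrite /= take_cat ltnNge leqnSn /= subSnn /=.
  by rewrite take0 cats1 Ha drop_size_cat.
rewrite /peak maxs_form // index_cat.
have -> : (M \in a) = false.
  apply/negP=> /(allP (ltn_rcons_all Ha)); by rewrite ltnn.
by rewrite /= eqxx addn0.
Qed.

Lemma wt_form a M b : sorted ltn (rcons a M) -> sorted geqr (M :: b) ->
  WT (a ++ M :: b) = \prod_(j <- a) wl j * \prod_(j <- b) wg j.
Proof.
move=> Ha Hb; have [U P] := form_updown Ha Hb.
rewrite /wt U P /= take_size_cat // drop_cat ltnNge leqnSn /= subSnn /=.
by rewrite drop0.
Qed.


Lemma updown_inv s : updown s -> exists a M b,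
  [/\ s = a ++ M :: b, sorted ltn (rcons a M) & sorted geqr (M :: b)].
Proof.
case/hasP=> p; rewrite mem_iota => /andP [p1 p2] /andP [H1 H2].
case: p p1 p2 H1 H2 => // n _; rewrite add1n ltnS => Hn H1 H2.
exists (take n s), (nth 0%N s n), (drop n.+1 s).
rewrite -(take_nth 0%N Hn) H1 -(drop_nth 0%N Hn) /=.
by rewrite cat_take_drop; split => //; rewrite -(drop_nth 0%N Hn) in H2.
Qed.

Lemma split_geq v b : sorted geqr b -> all (leq v) b ->
  exists b0 j, b = b0 ++ nseq j v /\ all (fun x => (v < x)%N) b0.
Proof.
elim: b => [|h t IH] /=; first by move=> _ _; exists [::], 0%N.
move=> Hs /andP [hv Ht].
have [b0 [j [E A]]] := IH (path_sorted Hs) Ht.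
case: (ltngtP v h) hv => // [vh|vh] _.
  by exists (h :: b0), j; rewrite /= E vh A.
exists [::], (size t).+1; subst h; split => //=.
congr cons; apply/all_pred1P/allP=> x xt.
have := allP (order_path_min geq_trans Hs) x xt.
by rewrite /= => xv; rewrite /= eqn_leq xv (allP Ht x xt).
Qed.

Lemma decomp v a M b : sorted ltn (rcons a M) -> sorted geqr (M :: b) ->
  all (leq v) (a ++ M :: b) -> (v < M)%N -> exists e j a0 b0,
  [/\ (e <= 1)%N, a = nseq e v ++ a0, b = b0 ++ nseq j v,
      all (fun x => (v < x)%N) a0 & all (fun x => (v < x)%N) b0].
Proof.
move=> Ha Hb; rewrite all_cat /= => /and3P [Av _ Bv] vM.
have [b0 [j [Eb B0]]] := split_geq (path_sorted Hb) Bv.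
case: a Ha Av => [|h t] Ha Av.
  by exists 0%N, j, [::], b0.
have Ht := order_path_min ltn_trans Ha.
rewrite all_rcons in Ht; case/andP: Ht => _ Ht.
move: Av => /= /andP [hv tv].
case: (ltngtP v h) hv => // [vh|vh] _.
  exists 0%N, j, (h :: t), b0; split => //=; rewrite vh /=.
  apply/allP=> x xt; exact: ltn_trans vh (allP Ht x xt).
subst h; exists 1%N, j, t, b0; split => //.
Qed.

Lemma ud_filter s v : updown s -> all (leq v) s -> (exists2 x, x \in s & (v < x)%N) ->
  updown (filter (predC1 v) s) /\
  exists e j, (e <= 1)%N /\ s = nseq e v ++ filter (predC1 v) s ++ nseq j v.
Proof.
case/updown_inv=> a [M [b [Es Ha Hb]]] Av [x xs vx].
have vM : (v < M)%N.
  apply: leq_trans vx _; rewrite Es in xs; exact: (allP (form_max Ha Hb)).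
rewrite Es in Av; have [e [j [a0 [b0 [e1 Ea Eb A0 B0]]]]] := decomp Ha Hb Av vM.
have Ef : filter (predC1 v) s = a0 ++ M :: b0.
  rewrite Es Ea Eb !filter_cat /= filter_nseq /= eqxx /= (gtn_eqF vM) /= filter_cat filter_nseq /= eqxx cats0.

  have F : forall c, all (fun x => (v < x)%N) c -> filter (predC1 v) c = c.
    move=> c Hc; apply/all_filterP/allP=> y yc /=; by rewrite gtn_eqF // (allP Hc y yc).
  by rewrite !F.
rewrite Ef; split.
  apply: (proj1 (form_updown _ _)).
    by move: Ha; rewrite Ea rcons_cat => /cat_sorted2 [].
  by move: Hb; rewrite Eb -cat_cons => /cat_sorted2 [].
by exists e, j; split => //; rewrite Es Ea Eb -!catA.
Qed.


Lemma prod_nseq (F : nat -> R) n v : \prod_(j <- nseq n v) F j = F v ^+ n.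
Proof. by elim: n => [|n IH]; rewrite ?big_nil // big_cons IH exprS. Qed.

Lemma path_nseq u n v : (v <= u)%N -> path geqr u (nseq n v).
Proof. by elim: n u => [|n IH] u //= vu; rewrite vu IH. Qed.

Lemma filter_gt v y : all (fun x => (v < x)%N) y -> filter (predC1 v) y = y.
Proof. by move=> Hc; apply/all_filterP/allP=> x xc /=; rewrite gtn_eqF // (allP Hc x xc). Qed.

Lemma geq_app u b n v : sorted geqr (u :: b) -> (v <= last u b)%N ->
  sorted geqr (u :: b ++ nseq n v).
Proof. by move=> /= H1 H2; rewrite cat_path H1 path_nseq. Qed.

Lemma wt_f1 v y n : y != [::] -> all (fun x => (v < x)%N) y ->
  WT (v :: y ++ nseq n v) = wl v * wg v ^+ n * WT y.
Proof.
move=> yn Ay; case: (boolP (updown y)) => U.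
  have [a [M [b [Ey Ha Hb]]]] := updown_inv U.
  have -> : v :: y ++ nseq n v = (v :: a) ++ M :: (b ++ nseq n v) by rewrite Ey -catA.
  have Ay' := Ay; rewrite Ey all_cat /= in Ay'; case/and3P: Ay' => Aa vM Ab.
  rewrite wt_form; last first.
    apply: geq_app => //; have := mem_last M b; rewrite inE => /orP [/eqP->|lb].
      exact: ltnW.
    exact: ltnW (allP Ab _ lb).
    by rewrite rcons_cons /= path_min_sorted // all_rcons; apply/andP.
  rewrite Ey wt_form // big_cons big_cat /= prod_nseq; ring.
have -> : WT y = 0 by rewrite /wt (negbTE U).
rewrite mulr0 /wt; case: ifP => // U'; exfalso.
have Hall : all (leq v) (v :: y ++ nseq n v).
  rewrite /= leqnn all_cat all_nseq leqnn orbT andbT /=.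
  by apply/allP=> x xy; apply: ltnW (allP Ay x xy).
have Hex : exists2 x, x \in v :: y ++ nseq n v & (v < x)%N.
  case: y yn Ay {U U'} Hall => // h t _ /= /andP [vh _] _.
  by exists h; rewrite ?inE ?eqxx ?orbT.
have [H _] := ud_filter U' Hall Hex.
move: H; rewrite /= eqxx /= filter_cat filter_gt // filter_nseq /= eqxx /= cats0.
by rewrite (negbTE U).
Qed.

Lemma wt_f0 v y n : y != [::] -> all (fun x => (v < x)%N) y ->
  WT (y ++ nseq n v) = wg v ^+ n * WT y.
Proof.
move=> yn Ay; case: (boolP (updown y)) => U.
  have [a [M [b [Ey Ha Hb]]]] := updown_inv U.
  have -> : y ++ nseq n v = a ++ M :: (b ++ nseq n v) by rewrite Ey -catA.
  have Ay' := Ay; rewrite Ey all_cat /= in Ay'; case/and3P: Ay' => Aa vM Ab.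
  rewrite wt_form //; last first.
    apply: geq_app => //; have := mem_last M b; rewrite inE => /orP [/eqP->|lb].
      exact: ltnW.
    exact: ltnW (allP Ab _ lb).
  rewrite Ey wt_form // big_cat /= prod_nseq; ring.
have -> : WT y = 0 by rewrite /wt (negbTE U).
rewrite mulr0 /wt; case: ifP => // U'; exfalso.
have Hall : all (leq v) (y ++ nseq n v).
  rewrite all_cat all_nseq leqnn orbT andbT /=.
  by apply/allP=> x xy; apply: ltnW (allP Ay x xy).
have Hex : exists2 x, x \in y ++ nseq n v & (v < x)%N.
  case: y yn Ay {U U'} Hall => // h t _ /= /andP [vh _] _.
  by exists h; rewrite ?inE ?eqxx ?orbT.
have [H _] := ud_filter U' Hall Hex.
move: H; rewrite /= filter_cat filter_gt // filter_nseq /= eqxx /= cats0.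
by rewrite (negbTE U).
Qed.


Lemma perm_filter_nseq v r w' x : all (fun x => (v < x)%N) w' ->
  perm_eq x (nseq r v ++ w') -> perm_eq (filter (predC1 v) x) w'.
Proof.
move=> Aw Px; have H := @perm_filter _ _ _ (predC1 v) Px; move: H.
by rewrite filter_cat filter_nseq /= eqxx /= (filter_gt Aw).
Qed.

Lemma wt_point v r w' x : (1 <= r)%N -> w' != [::] -> all (fun x => (v < x)%N) w' ->
  perm_eq x (nseq r v ++ w') ->
  WT x = (if x == v :: filter (predC1 v) x ++ nseq r.-1 v
          then wl v * wg v ^+ r.-1 * WT (filter (predC1 v) x) else 0)
       + (if x == filter (predC1 v) x ++ nseq r v
          then wg v ^+ r * WT (filter (predC1 v) x) else 0).
Proof.
move=> r1 wn Aw Px; set y := filter (predC1 v) x.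
have Py : perm_eq y w' := perm_filter_nseq Aw Px.
have yn : y != [::].
  by move: wn; rewrite -!size_eq0 (perm_size Py).
have Ay : all (fun x => (v < x)%N) y by rewrite (perm_all _ Py).
have D : (v :: y ++ nseq r.-1 v == y ++ nseq r v) = false.
  case: y yn Ay {Py} => // h t _ /= /andP [vh _].
  by rewrite eqseq_cons (ltn_eqF vh).
case: eqP => [E1|N1].
  have D1 : (x == y ++ nseq r v) = false by rewrite {1}E1 D.
  by rewrite D1 {1}E1 wt_f1 // addr0.
case: eqP => [E0|N0].
  by rewrite {1}E0 wt_f0 // add0r.
rewrite addr0 /wt; case: ifP => // U; exfalso.
have Hall : all (leq v) x.
  rewrite (perm_all _ Px) all_cat all_nseq leqnn orbT /=.
  by apply/allP=> z zw; apply: ltnW (allP Aw z zw).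
have Hex : exists2 z, z \in x & (v < z)%N.
  have [h [t Ey]] : exists h t, y = h :: t by move: yn; case: (y) => // h t _; exists h, t.
  have vh : (v < h)%N by move: Ay; rewrite Ey /= => /andP [].
  exists h => //; have : h \in y by rewrite Ey mem_head.
  by rewrite mem_filter => /andP [].
have [_ [e [j [e1 Ex]]]] := ud_filter U Hall Hex.
have C : (e + j)%N = r.
  have := (permP Px) (pred1 v); rewrite {1}Ex !count_cat !count_nseq /= eqxx !mul1n.
  have -> : count (pred1 v) (filter (predC1 v) x) = 0%N.
    by rewrite count_filter; apply/eqP; rewrite -leqn0 leqNgt -has_count; apply/hasP => -[z _ /= /andP []] /eqP ->; rewrite eqxx.
  have -> : count (pred1 v) w' = 0%N.
    apply/eqP; rewrite -leqn0 leqNgt -has_count; apply/hasP => -[z zw /= /eqP zv].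
    by move: (allP Aw z zw); rewrite zv ltnn.
  by rewrite add0n addn0.
case: e e1 Ex C => [|[|//]] _ Ex C.
  by apply: N0; rewrite -/y Ex /= -C.
by apply: N1; rewrite -/y Ex /= -C.
Qed.


Lemma reindex (s L : seq (seq nat)) (g h : seq nat -> seq nat) (F : seq nat -> R) :
  uniq s -> uniq L -> {in L, cancel g h} -> (forall y, y \in L -> g y \in s) ->
  (forall x, x \in s -> x = g (h x) -> h x \in L) ->
  \sum_(x <- s) (if x == g (h x) then F (h x) else 0) = \sum_(y <- L) F y.
Proof.
move=> Us UL Ch Hg Hh.
rewrite -big_mkcond -big_filter.
have -> : \sum_(y <- L) F y = \sum_(x <- map g L) F (h x).
  by rewrite big_map; apply: eq_big_seq => y yL; rewrite Ch.
apply: perm_big; apply: uniq_perm.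
- exact: filter_uniq.
- by rewrite map_inj_in_uniq //; apply: can_in_inj Ch.
move=> x; rewrite mem_filter; apply/andP/mapP.
  case=> /eqP E xs; exists (h x) => //; exact: Hh.
case=> y yL ->; rewrite Ch // eqxx; split => //; exact: Hg.
Qed.

Lemma sum_rec v r w' : (1 <= r)%N -> w' != [::] -> all (fun x => (v < x)%N) w' ->
  \sum_(x <- permutations (nseq r v ++ w')) WT x =
  (wl v * wg v ^+ r.-1 + wg v ^+ r) * \sum_(y <- permutations w') WT y.
Proof.
move=> r1 wn Aw.
rewrite (eq_big_seq _ (fun x xs => wt_point r1 wn Aw (etrans (esym (mem_permutations _ _)) xs))).
rewrite big_split /= mulrDl !mulr_sumr.
have Hh : forall x, x \in permutations (nseq r v ++ w') ->
    filter (predC1 v) x \in permutations w'.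
  by move=> x; rewrite !mem_permutations => Px; exact: perm_filter_nseq Aw Px.
have Ch : forall n, {in permutations w', cancel (fun y => v :: y ++ nseq n v) (filter (predC1 v))}
       /\ {in permutations w', cancel (fun y => y ++ nseq n v) (filter (predC1 v))}.
  move=> n; split=> y; rewrite mem_permutations => Py.
    rewrite /= eqxx /= filter_cat filter_gt ?(perm_all _ Py) // filter_nseq /= eqxx /=.
    by rewrite cats0.
  rewrite filter_cat filter_gt ?(perm_all _ Py) // filter_nseq /= eqxx /=.
  by rewrite cats0.
have Er : nseq r v = v :: nseq r.-1 v by rewrite -(prednK r1).
congr (_ + _).
  apply: reindex (permutations_uniq _) (permutations_uniq _) (proj1 (Ch _)) _ _.
    move=> y; rewrite !mem_permutations => Py.
    rewrite Er /= perm_cons -(perm_cat2l (nseq r.-1 v)) in Py * .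
    by rewrite perm_catC.
  by move=> x xs _; exact: Hh.
apply: reindex (permutations_uniq _) (permutations_uniq _) (proj2 (Ch _)) _ _.
  move=> y; rewrite !mem_permutations => Py.
  by rewrite perm_catC perm_cat2l.
by move=> x xs _; exact: Hh.
Qed.


Lemma sum_base v r : (1 <= r)%N ->
  \sum_(x <- permutations (nseq r v)) WT x = wg v ^+ r.-1.
Proof.
move=> r1.
have P : perm_eq (permutations (nseq r v)) [:: nseq r v].
  apply: uniq_perm => //; first exact: permutations_uniq.
  move=> x; rewrite mem_permutations inE; apply/idP/eqP => [Px|->//].
  have /all_pred1P -> : all (pred1 v) x by rewrite (perm_all _ Px) all_nseq /= eqxx orbT.
  by rewrite (perm_size Px) size_nseq.
rewrite (perm_big _ P) big_seq1 -(prednK r1) /=.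
have := @wt_form [::] v (nseq r.-1 v) (erefl _) (path_nseq r.-1 (leqnn v)).
by rewrite /= big_nil mul1r prod_nseq => ->.
Qed.

Lemma split_leq v w : sorted leq w -> all (leq v) w ->
  w = nseq (count_mem v w) v ++ filter (fun x => (v < x)%N) w.
Proof.
elim: w => [|h t IH] //= Hs /andP [vh Ht].
have St := path_sorted Hs.
case: (ltngtP v h) vh => // [vh|vh] _.
  rewrite /= add0n.
  have At : all (fun x => (v < x)%N) t.
    apply/allP=> x xt; exact: leq_trans vh (allP (order_path_min leq_trans Hs) x xt).
  rewrite (all_filterP At).
  suff -> : count (pred1 v) t = 0%N by [].
  apply/eqP; rewrite -leqn0 leqNgt -has_count; apply/hasP => -[x xt /= /eqP xv].
  by move: (allP At x xt); rewrite xv ltnn.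
subst h; rewrite add1n /=; congr cons; exact: IH.
Qed.

Lemma size_undup_nseq n (v : nat) (s : seq nat) : v \notin s ->
  size (undup (nseq n v ++ s)) = ((0 < n) + size (undup s))%N.
Proof.
move=> vs; elim: n => [|n IH] //=.
case: n IH => [|n] IH /=; first by rewrite (negbTE vs).
by rewrite inE eqxx /= IH.
Qed.


Definition Tf (w : seq nat) : R :=
  (- q^-1) ^+ (ell1 m k l w - delta1 m k l w) * q ^+ (ell0 m k l w - delta0 m k l w)
  * (q - q^-1) ^+ (delta0 m k l w + delta1 m k l w).-1.

Definition good j := par1 m k l j == ~~ par0 m k l j.

Lemma ell_cat (p : pred nat) r v s : count p (nseq r v ++ s) = (r * p v + count p s)%N.
Proof. by rewrite count_cat count_nseq mulnC. Qed.

Lemma delta_cat (p : pred nat) r v s : v \notin s ->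
  size (undup (filter p (nseq r v ++ s))) = ((0 < r * p v) + size (undup (filter p s)))%N.
Proof.
move=> vs; rewrite filter_cat filter_nseq size_undup_nseq //.
  by rewrite mulnC.
by rewrite mem_filter negb_and vs orbT.
Qed.

Lemma delta_le (p : pred nat) s : (size (undup (filter p s)) <= count p s)%N.
Proof. by rewrite -size_filter size_undup. Qed.

Lemma T_rec v r w' : (1 <= r)%N -> good v -> v \notin w' ->
  (0 < delta0 m k l w' + delta1 m k l w')%N ->
  Tf (nseq r v ++ w') = wg v ^+ r.-1 * (wl v + wg v) * Tf w'.
Proof.
move=> r1 gv vw dpos.
rewrite /Tf /ell0 /ell1 /delta0 /delta1 !ell_cat !delta_cat //.
have L0 := delta_le (par0 m k l) w'; have L1 := delta_le (par1 m k l) w'.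
move: dpos; rewrite /delta0 /delta1.
set e0 := count (par0 m k l) w'; set e1 := count (par1 m k l) w'.
set d0 := size (undup (filter (par0 m k l) w')); set d1 := size (undup (filter (par1 m k l) w')).
move=> dpos.
rewrite /wlt /wge; move: gv; rewrite /good => /eqP ->.
case: (par0 m k l v) => /=; rewrite ?muln1 ?muln0 r1 /= !add0n.
  have -> : (r + e0 - (1 + d0) = r.-1 + (e0 - d0))%N by lia.
  have -> : (d0 + d1 = (d0 + d1).-1.+1)%N by lia.
  rewrite exprD exprS; ring.
have -> : (r + e1 - (1 + d1) = r.-1 + (e1 - d1))%N by lia.
have -> : (d0 + (1 + d1)).-1 = (d0 + d1).-1.+1 by lia.
rewrite exprD exprS; ring.
Qed.

Lemma T_base v r : (1 <= r)%N -> good v -> Tf (nseq r v) = wg v ^+ r.-1.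
Proof.
move=> r1 gv; rewrite -(cats0 (nseq r v)).
rewrite /Tf /ell0 /ell1 /delta0 /delta1 !ell_cat !delta_cat //=.
rewrite /wge; move: gv; rewrite /good => /eqP ->.
case: (par0 m k l v) => /=; rewrite ?muln1 ?muln0 r1 /= !addn0 ?subn0 expr0 ?mulr1 ?mul1r.
  by rewrite subn1.
by rewrite subn1.
Qed.


Lemma undup_pos (s : seq nat) x : x \in s -> (0 < size (undup s))%N.
Proof. by rewrite -mem_undup; case: (undup s). Qed.

Lemma dpos_of w : w != [::] -> all good w -> (0 < delta0 m k l w + delta1 m k l w)%N.
Proof.
case: w => // h t _ /= /andP [gh _].
rewrite /delta0 /delta1; move: gh; rewrite /good => /eqP gh.
case P0: (par0 m k l h).
  have : h \in filter (par0 m k l) (h :: t) by rewrite mem_filter P0 mem_head.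
  by move/undup_pos => H; apply: leq_trans H (leq_addr _ _).
have : h \in filter (par1 m k l) (h :: t) by rewrite mem_filter gh P0 mem_head.
by move/undup_pos => H; apply: leq_trans H (leq_addl _ _).
Qed.

Lemma core w : sorted leq w -> w != [::] -> all good w ->
  \sum_(x <- permutations w) WT x = Tf w.
Proof.
have [n] := ubnP (size w); elim: n w => // n IH w Hn Sw wn Gw.
case: w wn Hn Sw Gw => // v w1 _ Hn Sw Gw.
have Av : all (leq v) (v :: w1).
  by rewrite /= leqnn; exact: (order_path_min leq_trans Sw).
have Ew := split_leq Sw Av.
move: Ew; set r := count_mem v (v :: w1); set w' := filter _ (v :: w1) => Ew.
have r1 : (1 <= r)%N by rewrite /r /= eqxx.
have gv : good v by case/andP: Gw.
have Aw : all (fun x => (v < x)%N) w' by apply: filter_all.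
have vw : v \notin w' by rewrite mem_filter ltnn.
case: (eqVneq w' [::]) => [w0|wn'].
  by rewrite Ew w0 cats0 sum_base // T_base.
have Sw' : sorted leq w' by apply: sorted_filter => //; exact: leq_trans.
have Gw' : all good w' by apply/allP=> x; rewrite mem_filter => /andP [_ /(allP Gw)].
have Sz : (size w' < n)%N.
  have := congr1 size Ew; rewrite size_cat size_nseq => E.
  move: Hn; rewrite E; lia.
rewrite Ew sum_rec // IH // T_rec //; last exact: dpos_of.
rewrite -(prednK r1) exprS; ring.
Qed.

End Comb.

Section Parity.
Variables (m : nat) (k l : nat -> nat).
Local Notation D := (dd k l).

Lemma dd_S a : D a.+1 = (D a + (k a.+1 + l a.+1))%N.
Proof. by rewrite /dd big_nat_recr. Qed.

Lemma dd_mono a b : (a <= b)%N -> (D a <= D b)%N.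
Proof.
move=> /subnK <-; elim: (b - a)%N => [|n IH] //.
by rewrite addSn dd_S; apply: leq_trans IH (leq_addr _ _).
Qed.

Lemma dd_pred a : (0 < a)%N -> D a = (D a.-1 + (k a + l a))%N.
Proof. by case: a => // a _; rewrite dd_S. Qed.

Lemma exists_block v : (0 < v)%N -> (v <= D m)%N ->
  exists a, [/\ (1 <= a <= m)%N, (D a.-1 < v)%N & (v <= D a)%N].
Proof.
move=> v0; elim: m => [|n IH]; first by rewrite /dd big_geq // => H; exfalso; lia.
case: (leqP v (D n)) => [H _|H H2].
  have [a [a1 a2 a3]] := IH H; exists a; split => //; lia.
by exists n.+1; split => //=; rewrite ltnS leqnn andbT.
Qed.

Lemma good_of v : (0 < v)%N -> (v <= NN m k l)%N ->
  par1 m k l v == ~~ par0 m k l v.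
Proof.
move=> v0 vN; have [a [/andP [a1 am] Ha Hb]] := exists_block v0 vN.
have Da := dd_pred a1.
have aI : a \in iota 1 m by rewrite mem_iota; lia.
have P0 : par0 m k l v = (v <= D a.-1 + k a)%N.
  apply/hasP/idP => [[b bI /andP [h1 h2]]|H]; last by exists a => //; rewrite Ha H.
  rewrite mem_iota in bI.
  case: (ltngtP b a) => [ba|ab|E]; last by subst b.
  - have := dd_mono (_ : b <= a.-1)%N; have Db := dd_pred (_ : 0 < b)%N. lia.
  - have := dd_mono (_ : a <= b.-1)%N. lia.
have P1 : par1 m k l v = ~~ (v <= D a.-1 + k a)%N.
  apply/hasP/idP => [[b bI /andP [h1 h2]]|H]; last first.
    by exists a => //; rewrite Hb andbT; lia.
  rewrite mem_iota in bI.
  case: (ltngtP b a) => [ba|ab|E]; last by subst b; lia.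
  - have := dd_mono (_ : b <= a.-1)%N. lia.
  - have := dd_mono (_ : a <= b.-1)%N; have Db := dd_pred (_ : 0 < b)%N. lia.
by rewrite P0 P1.
Qed.

End Parity.

Section Main.
Variables (R : comUnitRingType) (N : nat).
Local Notation ord := (fun x y : 'I_N => (x <= y)%N).
Local Notation f := (fun i : 'I_N => (val i).+1).

Lemma ord_total : total ord. Proof. by move=> x y; exact: leq_total. Qed.
Lemma ord_trans : transitive ord. Proof. by move=> x y z; exact: leq_trans. Qed.
Lemma ord_anti : antisymmetric ord.
Proof. by move=> x y H; apply: val_inj; apply: anti_leq. Qed.

Lemma f_inj : injective f. Proof. by move=> x y [] /val_inj. Qed.

Lemma idx_sorted t (u : t.-tuple 'I_N) : sorted leq (idx u) = sorted ord u.
Proof. by rewrite /idx sorted_map. Qed.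

Lemma idx_inj t : injective (@idx N t).
Proof. by move=> x y /(inj_map f_inj) /val_inj. Qed.

Lemma pmap_insub (x : seq nat) : all (fun n => (0 < n <= N)%N) x ->
  map f (pmap (fun n => insub (n.-1)) x) = x.
Proof.
elim: x => [|n x IH] //= /andP [/andP [n0 nN] Hx].
rewrite insubT /=; first by case: n n0 nN {IH Hx}.
by move=> Hn; rewrite /= IH // prednK.
Qed.

Lemma sum_tuple_perm t (u : t.-tuple 'I_N) (F : seq nat -> R) :
  sorted ord u ->
  \sum_(s : t.-tuple 'I_N | sort_tuple ord s == u) F (idx s) =
  \sum_(x <- permutations (idx u)) F x.
Proof.
move=> Su.
rewrite -big_filter -(big_map (@idx N t) xpredT).
apply: perm_big; apply: uniq_perm.
- rewrite map_inj_uniq ?filter_uniq ?index_enum_uniq //; exact: idx_inj.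
- exact: permutations_uniq.
move=> x; rewrite mem_permutations; apply/mapP/idP.
  case=> s; rewrite mem_filter => /andP [/eqP Es _] ->.
  rewrite /idx; apply: perm_map; rewrite -Es /=; by rewrite perm_sym perm_sort.
move=> Px.
have Ax : all (fun n => (0 < n <= N)%N) x.
  rewrite (perm_all _ Px); apply/allP=> n /mapP [i _ ->] /=; exact: ltn_ord.
pose y : seq 'I_N := pmap (fun n => insub (n.-1)) x.
have Ey : map f y = x := pmap_insub Ax.
have sy : size y == t by rewrite -(size_map f) Ey (perm_size Px) size_map size_tuple.
exists (Tuple sy); last by rewrite /idx /= Ey.
rewrite mem_filter mem_index_enum andbT; apply/eqP/val_inj => /=.
have Py : perm_eq y u by apply: (perm_map_inj f_inj); rewrite Ey.
by rewrite (perm_sortP ord_total ord_trans ord_anti _ _ Py) (sorted_sort ord_trans Su).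
Qed.

End Main.

Unset Implicit Arguments.

Theorem mainTheorem2 (R : comUnitRingType) (m : nat) (k l : nat -> nat)
    (q : R) (Q : nat -> R) (z : nat -> R) (hm : (1 <= m)%N) (hq : q \is a GRing.unit)
    (t a : nat) (ht : (1 <= t)%N) (ha : (1 <= a <= m)%N) :
  qat m k l q Q z a t =
  \sum_(s : t.-tuple 'I_(NN m k l))
     wt m k l q (idx s) * Q (colseq m k l (idx s)) ^+ a * zseq m k l z (idx s).
Proof.
rewrite [RHS](partition_big (fun s : t.-tuple 'I_(NN m k l) =>
    sort_tuple (fun x y : 'I_(NN m k l) => (x <= y)%N) s)
  (fun u : t.-tuple 'I_(NN m k l) => sorted leq (idx u))); last first.
  move=> s _; rewrite idx_sorted /=; apply: sort_sorted; exact: ord_total.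
rewrite /qat; apply: eq_bigr => u Su.
rewrite (eq_bigl (fun s => sort_tuple (fun x y : 'I_(NN m k l) => (x <= y)%N) s == u));
  last by move=> s.
rewrite (eq_bigr (fun s => wt m k l q (idx s) *
   (Q (colseq m k l (idx u)) ^+ a * zseq m k l z (idx u)))); last first.
  move=> s /eqP Es.
  have Ps : perm_eq (idx s) (idx u).
    by rewrite /idx; apply: perm_map; rewrite -Es /= perm_sym perm_sort.
  rewrite /colseq /maxs (perm_big _ Ps) /zseq /ell1 (permP Ps) (perm_big _ Ps).
  by rewrite mulrA.
rewrite -mulr_suml.
rewrite (sum_tuple_perm (fun x => wt m k l q x)); last by rewrite -idx_sorted.
rewrite core //.
- rewrite /Tf; ring.
- by rewrite -size_eq0 /idx size_map size_tuple -lt0n.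
- apply/allP=> v /mapP [i _ ->]; apply: good_of => //; exact: ltn_ord.
Qed.
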